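(* Let $q=2^m$, let $k\in\mathbb{F}_q$ with $Tr(k)=1$, let $i\in\mathbb{F}_{q^2}\setminus\mathbb{F}_q$ with $i^2=i+k$, let $\overline{k}\in\mathbb{F}_q$ with $\overline{k}^4=k$, and let $\alpha=A+iB$, $\beta=C+iD$ with $A,B,C,D\in\mathbb{F}_q$ and $\alpha\beta\neq 0$. Then the following are equivalent: (i) $A=(\eta\overline{k}+\eta+\xi)^2(\eta^2\overline{k}+\eta\xi+\xi^2+1)$, $B=\eta^4\overline{k}+\xi^2\eta^2+\xi\eta^3+\eta^2$, $C=\xi^4$, $D=\eta^4$ for some $\xi,\eta\in\mathbb{F}_q$ with $\eta\neq 0$, $Tr\left(\frac{B}{D}+1+\frac{1}{D^2}+\frac{D}{B^2}\right)=1$, and $\eta^2\overline{k}+\xi^2+\xi\eta+1\notin\{0,\eta^2\}$; (ii) $\beta(1+\alpha^{q+1}+\beta^{q+1})+\alpha^{2q}=0$, $\beta^{q+1}\neq 1$, $Tr\left(\frac{\beta^{q+1}}{\alpha^{q+1}}\right)=0$, and $\beta\in\mathbb{F}_{q^2}\setminus\mathbb{F}_q$.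
   Context: $Tr:\mathbb{F}_q\to\mathbb{F}_2$ is the absolute trace $Tr(z)=z+z^2+\cdots+z^{2^{m-1}}$. *)

(* Defs.v *)
From HB Require Import structures.
From mathcomp Require Import all_boot all_order all_algebra all_field.
Set Implicit Arguments. Unset Strict Implicit. Unset Printing Implicit Defensive.
Import GRing.Theory.
Local Open Scope ring_scope.

(* Absolute trace F_{2^m} -> F_2, computed inside a field L containing F_{2^m}:
   Tr(z) = z + z^2 + ... + z^(2^(m-1)). *)
Definition absTr (L : fieldType) (m : nat) (z : L) : L :=
  \sum_(j < m) z ^+ (2 ^ j).

Definition inFq (L : fieldType) (q : nat) (x : L) : bool := x ^+ q == x.

(* Main.v *)
Require Import Defs.
From HB Require Import structures.
From mathcomp Require Import all_boot all_order all_algebra all_field.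
From mathcomp Require Import ring.
Import GRing.Theory.
Local Open Scope ring_scope.

Lemma id2 (L : fieldType) (a b Z c r : L) :
  2%:R = 0 :> L -> r = 0 -> a - b = 2%:R * Z + c * r -> a = b.
Proof. by move=> h2 hr e; apply/eqP; rewrite -subr_eq0 e h2 hr !mul0r mulr0 addr0. Qed.

Lemma sqrD2 (L : fieldType) (x y : L) : 2%:R = 0 :> L -> (x + y) ^+ 2 = x ^+ 2 + y ^+ 2.
Proof. by move=> h2; rewrite sqrrD -mulr_natr h2 mulr0 addr0. Qed.

Lemma frobD2 (L : fieldType) n (x y : L) : 2%:R = 0 :> L ->
  (x + y) ^+ (2 ^ n) = x ^+ (2 ^ n) + y ^+ (2 ^ n).
Proof.
move=> h2; elim: n => [|n IH]; first by rewrite !expr1.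
by rewrite expnSr !exprM IH sqrD2.
Qed.

Lemma sq_inj2 (L : fieldType) (x y : L) : 2%:R = 0 :> L -> x ^+ 2 = y ^+ 2 -> x = y.
Proof.
move=> h2 e; have : (x - y) ^+ 2 = 0.
  by rewrite sqrD2 // sqrrN e -mulr2n -mulr_natr h2 mulr0.
by move/eqP; rewrite expf_eq0 /= subr_eq0 => /eqP.
Qed.

Lemma inFq_add (L : fieldType) n (x y : L) : 2%:R = 0 :> L ->
  inFq (2 ^ n) x -> inFq (2 ^ n) y -> inFq (2 ^ n) (x + y).
Proof. by move=> h2 /eqP hx /eqP hy; apply/eqP; rewrite frobD2 // hx hy. Qed.

Lemma inFq_mul (L : fieldType) q (x y : L) :
  inFq q x -> inFq q y -> inFq q (x * y).
Proof. by move=> /eqP hx /eqP hy; apply/eqP; rewrite exprMn hx hy. Qed.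

Lemma inFq_inv (L : fieldType) q (x : L) : inFq q x -> inFq q (x^-1).
Proof. by move=> /eqP hx; apply/eqP; rewrite exprVn hx. Qed.

Lemma inFq_exp (L : fieldType) q n (x : L) : inFq q x -> inFq q (x ^+ n).
Proof. by move=> /eqP hx; apply/eqP; rewrite exprAC hx. Qed.

Lemma inFq_1 (L : fieldType) q : inFq q (1 : L).
Proof. by apply/eqP; rewrite expr1n. Qed.

Lemma absTrD (L : fieldType) m (x y : L) : 2%:R = 0 :> L ->
  absTr m (x + y) = absTr m x + absTr m y.
Proof. by move=> h2; rewrite /absTr -big_split /=; apply: eq_bigr => j _; rewrite frobD2. Qed.

Lemma absTr_sq (L : fieldType) m (x : L) : inFq (2 ^ m) x ->
  absTr m (x ^+ 2) = absTr m x.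
Proof.
move=> /eqP hx; rewrite /absTr.
have e : \sum_(j < m) (x ^+ 2) ^+ (2 ^ j) = \sum_(j < m) x ^+ (2 ^ (bump 0 j)).
  by apply: eq_bigr => j _; rewrite -exprM /bump /= add1n expnS.
rewrite e.
have h1 : \sum_(j < m.+1) x ^+ (2 ^ j) = x + \sum_(j < m) x ^+ (2 ^ (bump 0 j)).
  by rewrite big_ord_recl expn0 expr1.
have h3 : \sum_(j < m.+1) x ^+ (2 ^ j) = \sum_(j < m) x ^+ (2 ^ j) + x.
  by rewrite big_ord_recr /= hx.
by apply: (addrI x); rewrite -h1 h3 addrC.
Qed.

Lemma absTr_sqx (L : fieldType) m (x : L) : 2%:R = 0 :> L -> inFq (2 ^ m) x ->
  absTr m (x ^+ 2 + x) = 0.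
Proof.
by move=> h2 hx; rewrite absTrD // absTr_sq // -mulr2n -mulr_natr h2 mulr0.
Qed.
Lemma normE {L : fieldType} (two0 : 2%:R = 0 :> L) (i kbar X Y : L) (hI : i^+2 - i - kbar^+4 = 0) :
  (X + i*Y)*(X + Y + i*Y) = X^+2 + X*Y + kbar^+4*Y^+2.
Proof. apply: (@id2 L _ _ ((X * Y * i) + (Y ^+ 2 * i)) ((Y ^+ 2)) _ two0 hI); ring. Qed.

Lemma decE {L : fieldType} (two0 : 2%:R = 0 :> L) (i kbar A B C D s : L) (hI : i^+2 - i - kbar^+4 = 0) :
  (C + i*D)*s + (A + B + i*B)^+2 = (C*s + A^+2 + (1+kbar^+4)*B^+2) + i*(D*s + B^+2).
Proof. apply: (@id2 L _ _ ((A * B) + (A * B * i) + (B ^+ 2 * i)) ((B ^+ 2)) _ two0 hI); ring. Qed.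

Lemma NaE {L : fieldType} (two0 : 2%:R = 0 :> L) (kbar xi eta P : L) (hP : P = (eta^+2*kbar+xi^+2+xi*eta+1)) :
  (P*(eta*kbar+eta+xi)^+2)^+2 + (P*(eta*kbar+eta+xi)^+2)*(eta^+2*P) + kbar^+4*(eta^+2*P)^+2 = P^+2*(P+1)^+2.
Proof. subst P; apply: (@id2 L _ _ (0 - (2%:R) + (2%:R * eta * kbar * xi ^+ 3) + (4%:R * eta * kbar * xi ^+ 5) + (2%:R * eta * kbar * xi ^+ 7) - (6%:R * eta * xi) - (11%:R * eta * xi ^+ 3) - (4%:R * eta * xi ^+ 5) + (eta * xi ^+ 7) - (6%:R * eta ^+ 2 * kbar) - (7%:R * eta ^+ 2 * kbar * xi ^+ 2) + (8%:R * eta ^+ 2 * kbar * xi ^+ 4) + (9%:R * eta ^+ 2 * kbar * xi ^+ 6) + (3%:R * eta ^+ 2 * kbar ^+ 2 * xi ^+ 2) + (6%:R * eta ^+ 2 * kbar ^+ 2 * xi ^+ 4) + (3%:R * eta ^+ 2 * kbar ^+ 2 * xi ^+ 6) - (3%:R * eta ^+ 2 * xi ^+ 2) + (2%:R * eta ^+ 2 * xi ^+ 4) + (5%:R * eta ^+ 2 * xi ^+ 6) - (6%:R * eta ^+ 3 * kbar * xi) + (12%:R * eta ^+ 3 * kbar * xi ^+ 3) + (20%:R * eta ^+ 3 * kbar * xi ^+ 5) + (6%:R * eta ^+ 3 * kbar ^+ 2 * xi) + (22%:R * eta ^+ 3 * kbar ^+ 2 * xi ^+ 3) + (16%:R * eta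 ^+ 3 * kbar ^+ 2 * xi ^+ 5) + (2%:R * eta ^+ 3 * kbar ^+ 3 * xi) + (4%:R * eta ^+ 3 * kbar ^+ 3 * xi ^+ 3) + (2%:R * eta ^+ 3 * kbar ^+ 3 * xi ^+ 5) + (3%:R * eta ^+ 3 * xi) + (10%:R * eta ^+ 3 * xi ^+ 3) + (10%:R * eta ^+ 3 * xi ^+ 5) + (eta ^+ 4) + (3%:R * eta ^+ 4 * kbar) + (18%:R * eta ^+ 4 * kbar * xi ^+ 2) + (28%:R * eta ^+ 4 * kbar * xi ^+ 4) - (3%:R * eta ^+ 4 * kbar ^+ 2) + (22%:R * eta ^+ 4 * kbar ^+ 2 * xi ^+ 2) + (32%:R * eta ^+ 4 * kbar ^+ 2 * xi ^+ 4) + (2%:R * eta ^+ 4 * kbar ^+ 3) + (14%:R * eta ^+ 4 * kbar ^+ 3 * xi ^+ 2) + (12%:R * eta ^+ 4 * kbar ^+ 3 * xi ^+ 4) + (eta ^+ 4 * kbar ^+ 4) + (2%:R * eta ^+ 4 * kbar ^+ 4 * xi ^+ 2) + (eta ^+ 4 * kbar ^+ 4 * xi ^+ 4) + (8%:R * eta ^+ 4 * xi ^+ 2) + (10%:R * eta ^+ 4 * xi ^+ 4) + (12%:R * eta ^+ 5 * kbar * xi) + (24%:R * eta ^+ 5 * kbar * xi ^+ 3) + (12%:R * eta ^+ 5 * kbar ^+ 2 * xi) + (35%:R * eta ^+ 5 * kbar ^+ 2 * xi ^+ 3) + (16%:R * eta ^+ 5 * kbar ^+ 3 * xi) + (26%:R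 * eta ^+ 5 * kbar ^+ 3 * xi ^+ 3) + (6%:R * eta ^+ 5 * kbar ^+ 4 * xi) + (6%:R * eta ^+ 5 * kbar ^+ 4 * xi ^+ 3) + (2%:R * eta ^+ 5 * xi) + (5%:R * eta ^+ 5 * xi ^+ 3) + (2%:R * eta ^+ 6 * kbar) + (11%:R * eta ^+ 6 * kbar * xi ^+ 2) + (6%:R * eta ^+ 6 * kbar ^+ 2) + (24%:R * eta ^+ 6 * kbar ^+ 2 * xi ^+ 2) + (4%:R * eta ^+ 6 * kbar ^+ 3) + (25%:R * eta ^+ 6 * kbar ^+ 3 * xi ^+ 2) + (4%:R * eta ^+ 6 * kbar ^+ 4) + (12%:R * eta ^+ 6 * kbar ^+ 4 * xi ^+ 2) + (2%:R * eta ^+ 6 * kbar ^+ 5) + (2%:R * eta ^+ 6 * kbar ^+ 5 * xi ^+ 2) + (eta ^+ 6 * xi ^+ 2) + (2%:R * eta ^+ 7 * kbar * xi) + (9%:R * eta ^+ 7 * kbar ^+ 2 * xi) + (12%:R * eta ^+ 7 * kbar ^+ 3 * xi) + (10%:R * eta ^+ 7 * kbar ^+ 4 * xi) + (4%:R * eta ^+ 7 * kbar ^+ 5 * xi) + (eta ^+ 8 * kbar ^+ 2) + (3%:R * eta ^+ 8 * kbar ^+ 3) + (3%:R * eta ^+ 8 * kbar ^+ 4) + (2%:R * eta ^+ 8 * kbar ^+ 5) + (eta ^+ 8 * kbar ^+ 6) - (6%:R * xi ^+ 2) - (6%:R * xi ^+ 4) - (2%:R * xi ^+ 6)) 0 _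 two0 (erefl (0:L))); ring. Qed.

Lemma NbE {L : fieldType} (two0 : 2%:R = 0 :> L) (kbar xi eta P : L) (hP : P = (eta^+2*kbar+xi^+2+xi*eta+1)) :
  (xi^+4)^+2 + xi^+4*eta^+4 + kbar^+4*(eta^+4)^+2 = (P+1)^+4.
Proof. subst P; apply: (@id2 L _ _ (0 - (8%:R) - (16%:R * eta * xi) - (24%:R * eta * xi ^+ 3) - (12%:R * eta * xi ^+ 5) - (2%:R * eta * xi ^+ 7) - (16%:R * eta ^+ 2 * kbar) - (24%:R * eta ^+ 2 * kbar * xi ^+ 2) - (12%:R * eta ^+ 2 * kbar * xi ^+ 4) - (2%:R * eta ^+ 2 * kbar * xi ^+ 6) - (12%:R * eta ^+ 2 * xi ^+ 2) - (12%:R * eta ^+ 2 * xi ^+ 4) - (3%:R * eta ^+ 2 * xi ^+ 6) - (24%:R * eta ^+ 3 * kbar * xi) - (24%:R * eta ^+ 3 * kbar * xi ^+ 3) - (6%:R * eta ^+ 3 * kbar * xi ^+ 5) - (4%:R * eta ^+ 3 * xi ^+ 3) - (2%:R * eta ^+ 3 * xi ^+ 5) - (12%:R * eta ^+ 4 * kbar * xi ^+ 2) - (6%:R * eta ^+ 4 * kbar * xi ^+ 4) - (12%:R * eta ^+ 4 * kbar ^+ 2) - (12%:R * eta ^+ 4 * kbar ^+ 2 * xi ^+ 2) - (3%:R * eta ^+ 4 * kbar ^+ 2 * xi ^+ 4) - (2%:R * eta ^+ 5 * kbar * xi ^+ 3) - (12%:R * eta ^+ 5 * kbar ^+ 2 *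 xi) - (6%:R * eta ^+ 5 * kbar ^+ 2 * xi ^+ 3) - (3%:R * eta ^+ 6 * kbar ^+ 2 * xi ^+ 2) - (4%:R * eta ^+ 6 * kbar ^+ 3) - (2%:R * eta ^+ 6 * kbar ^+ 3 * xi ^+ 2) - (2%:R * eta ^+ 7 * kbar ^+ 3 * xi) - (16%:R * xi ^+ 2) - (12%:R * xi ^+ 4) - (4%:R * xi ^+ 6)) 0 _ two0 (erefl (0:L))); ring. Qed.

Lemma XE {L : fieldType} (two0 : 2%:R = 0 :> L) (kbar xi eta P : L) :
  xi^+4*(1 + P^+2*(P+1)^+2 + (P+1)^+4) + (P*(eta*kbar+eta+xi)^+2)^+2 + (1+kbar^+4)*(eta^+2*P)^+2 = 0.
Proof. apply: (@id2 L _ _ ((2%:R * P * xi ^+ 4) + (2%:R * P ^+ 2 * eta * kbar * xi ^+ 3) + (2%:R * P ^+ 2 * eta * xi ^+ 3) + (6%:R * P ^+ 2 * eta ^+ 2 * kbar * xi ^+ 2) + (3%:R * P ^+ 2 * eta ^+ 2 * kbar ^+ 2 * xi ^+ 2) + (3%:R * P ^+ 2 * eta ^+ 2 * xi ^+ 2) + (6%:R * P ^+ 2 * eta ^+ 3 * kbar * xi) + (6%:R * P ^+ 2 * eta ^+ 3 * kbar ^+ 2 * xi) + (2%:R * P ^+ 2 * eta ^+ 3 * kbar ^+ 3 * xi) + (2%:R * P ^+ 2 * eta ^+ 3 * xi) + (P ^+ 2 * eta ^+ 4) + (2%:R * P ^+ 2 * eta ^+ 4 * kbar) + (3%:R * P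 ^+ 2 * eta ^+ 4 * kbar ^+ 2) + (2%:R * P ^+ 2 * eta ^+ 4 * kbar ^+ 3) + (P ^+ 2 * eta ^+ 4 * kbar ^+ 4) + (4%:R * P ^+ 2 * xi ^+ 4) + (3%:R * P ^+ 3 * xi ^+ 4) + (P ^+ 4 * xi ^+ 4) + (xi ^+ 4)) 0 _ two0 (erefl (0:L))); ring. Qed.

Lemma YE {L : fieldType} (two0 : 2%:R = 0 :> L) (eta P : L) :
  eta^+4*(1 + P^+2*(P+1)^+2 + (P+1)^+4) + (eta^+2*P)^+2 = 0.
Proof. apply: (@id2 L _ _ ((2%:R * P * eta ^+ 4) + (4%:R * P ^+ 2 * eta ^+ 4) + (3%:R * P ^+ 3 * eta ^+ 4) + (P ^+ 4 * eta ^+ 4) + (eta ^+ 4)) 0 _ two0 (erefl (0:L))); ring. Qed.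

Lemma DCE {L : fieldType} (two0 : 2%:R = 0 :> L) (kbar xi eta A B s : L) :
  eta^+4*(xi^+4*s + A^+2 + (1+kbar^+4)*B^+2) + xi^+4*(eta^+4*s + B^+2) = (eta^+2*A)^+2 - (B*(eta*kbar+eta+xi)^+2)^+2.
Proof. apply: (@id2 L _ _ ((2%:R * B ^+ 2 * eta * kbar * xi ^+ 3) + (2%:R * B ^+ 2 * eta * xi ^+ 3) + (6%:R * B ^+ 2 * eta ^+ 2 * kbar * xi ^+ 2) + (3%:R * B ^+ 2 * eta ^+ 2 * kbar ^+ 2 * xi ^+ 2) + (3%:R * B ^+ 2 * eta ^+ 2 * xi ^+ 2) + (6%:R * B ^+ 2 * eta ^+ 3 * kbar * xi) + (6%:R * B ^+ 2 * eta ^+ 3 * kbar ^+ 2 * xi) + (2%:R * B ^+ 2 * eta ^+ 3 * kbar ^+ 3 * xi) + (2%:R * B ^+ 2 * eta ^+ 3 * xi) + (B ^+ 2 * eta ^+ 4) + (2%:R * B ^+ 2 * eta ^+ 4 * kbar) + (3%:R * B ^+ 2 * eta ^+ 4 * kbar ^+ 2) + (2%:R * B ^+ 2 * eta ^+ 4 * kbar ^+ 3) + (B ^+ 2 * eta ^+ 4 * kbar ^+ 4) + (B ^+ 2 * xi ^+ 4) + (eta ^+ 4 * s * xi ^+ 4)) 0 _ two0 (erefl (0:L))); ring. Qed.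

Lemma Na2E {L : fieldType} (two0 : 2%:R = 0 :> L) (kbar xi eta B P : L) (hP : P = (eta^+2*kbar+xi^+2+xi*eta+1)) :
  (B*(eta*kbar+eta+xi)^+2)^+2 + eta^+2*(B*(eta*kbar+eta+xi)^+2)*B + kbar^+4*eta^+4*B^+2 = B^+2*(P^+2+1).
Proof. subst P; apply: (@id2 L _ _ (0 - (B ^+ 2) + (2%:R * B ^+ 2 * eta * kbar * xi ^+ 3) - (B ^+ 2 * eta * xi) + (B ^+ 2 * eta * xi ^+ 3) - (B ^+ 2 * eta ^+ 2 * kbar) + (5%:R * B ^+ 2 * eta ^+ 2 * kbar * xi ^+ 2) + (3%:R * B ^+ 2 * eta ^+ 2 * kbar ^+ 2 * xi ^+ 2) + (3%:R * B ^+ 2 * eta ^+ 2 * xi ^+ 2) + (6%:R * B ^+ 2 * eta ^+ 3 * kbar * xi) + (6%:R * B ^+ 2 * eta ^+ 3 * kbar ^+ 2 * xi) + (2%:R * B ^+ 2 * eta ^+ 3 * kbar ^+ 3 * xi) + (3%:R * B ^+ 2 * eta ^+ 3 * xi) + (B ^+ 2 * eta ^+ 4) + (3%:R * B ^+ 2 * eta ^+ 4 * kbar) + (3%:R * B ^+ 2 * eta ^+ 4 * kbar ^+ 2) + (2%:R * B ^+ 2 * eta ^+ 4 * kbar ^+ 3) + (B ^+ 2 * eta ^+ 4 * kbar ^+ 4) - (B ^+ 2 * xi ^+ 2)) 0 _ two0 (erefl (0:L))); ring. Qed.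

Lemma Y2E {L : fieldType} (two0 : 2%:R = 0 :> L) (eta B P : L) :
  eta^+8*(1+(P+1)^+4) + eta^+4*(B^+2*(P^+2+1)) + eta^+4*B^+2 = eta^+4*((eta^+2*P^+2)^+2 - (B*P)^+2).
Proof. apply: (@id2 L _ _ ((B ^+ 2 * P ^+ 2 * eta ^+ 4) + (B ^+ 2 * eta ^+ 4) + (2%:R * P * eta ^+ 8) + (3%:R * P ^+ 2 * eta ^+ 8) + (2%:R * P ^+ 3 * eta ^+ 8) + (eta ^+ 8)) 0 _ two0 (erefl (0:L))); ring. Qed.

Arguments inFq_add {L n x y}.
Arguments inFq_mul {L q x y}.
Arguments inFq_inv {L q x}.
Arguments inFq_exp {L q n x}.
Arguments inFq_1 {L q}.

Ltac fq two0 := repeat first [ assumption | apply: inFq_1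
  | apply: (inFq_add two0) | apply: inFq_mul | apply: inFq_inv | apply: inFq_exp ].

Lemma absTr_pow (L : fieldType) m (x : L) n : inFq (2 ^ m) x ->
  absTr m (x ^+ (2 ^ n)) = absTr m x.
Proof.
move=> Fx; elim: n => [|n IH]; first by rewrite expr1.
by rewrite expnSr exprM absTr_sq ?IH //; apply: inFq_exp.
Qed.

Lemma oppc2 (L : fieldType) (two0 : 2%:R = 0 :> L) (x : L) : - x = x.
Proof. by apply/eqP; rewrite -subr_eq0 -opprD -mulr2n -mulr_natr two0 mulr0 oppr0. Qed.
Arguments oppc2 {L}.

Lemma compP {L : fieldType} q (two0 : 2%:R = 0 :> L) (i X Y : L) :
  ~~ inFq q i -> inFq q X -> inFq q Y -> X + i * Y = 0 -> X = 0 /\ Y = 0.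
Proof.
move=> hi FX FY e.
case: (eqVneq Y 0) => [Y0 | Y0].
  by move: e; rewrite Y0 mulr0 addr0.
exfalso; move/negP: hi; apply.
have -> : i = X / Y.
  apply: (mulIf Y0); rewrite divfK //.
  by apply/eqP; rewrite -subr_eq0 (oppc2 two0) addrC e.
exact: (inFq_mul FX (inFq_inv FY)).
Qed.

Lemma trace_core {L : fieldType} m (two0 : 2%:R = 0 :> L) (kbar xi eta P : L) :
  inFq (2 ^ m) kbar -> inFq (2 ^ m) xi -> inFq (2 ^ m) eta -> absTr m kbar = 1 ->
  eta != 0 -> P != 0 -> P + 1 != 0 -> P = eta ^+ 2 * kbar + xi ^+ 2 + xi * eta + 1 ->
  absTr m (eta ^+ 2 * P / eta ^+ 4 + 1 + 1 / (eta ^+ 4) ^+ 2 + eta ^+ 4 / (eta ^+ 2 * P) ^+ 2)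
  = 1 + absTr m ((P + 1) ^+ 4 / (P ^+ 2 * (P + 1) ^+ 2)).
Proof.
move=> Fk Fx Fe Tk e0 P0 P10 hP.
have FP : inFq (2 ^ m) P by rewrite hP; fq two0.
have e1 : eta ^+ 2 * P / eta ^+ 4 + 1 + 1 / (eta ^+ 4) ^+ 2 + eta ^+ 4 / (eta ^+ 2 * P) ^+ 2
   = kbar + ((xi / eta) ^+ (2 ^ 1) + xi / eta) + (eta^-1) ^+ (2 ^ 3) + (eta^-1) ^+ (2 ^ 1) + 1
     + (P^-1) ^+ (2 ^ 1).
  rewrite {1}hP; field.
  by rewrite P0 e0.
have e2 : (P + 1) ^+ 4 / (P ^+ 2 * (P + 1) ^+ 2) = 1 + (P^-1) ^+ (2 ^ 1).
  have -> : (P + 1) ^+ 4 / (P ^+ 2 * (P + 1) ^+ 2) = (1 + P^-1) ^+ 2 by field; rewrite P0 P10.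
  by rewrite sqrD2 // expr1n.
have Fxe : inFq (2 ^ m) (xi / eta) by fq two0.
have Fei : inFq (2 ^ m) (eta^-1) by fq two0.
have FPi : inFq (2 ^ m) (P^-1) by fq two0.
rewrite e1 e2 !absTrD // !absTr_pow // Tk.
by apply: (@id2 L _ _ (absTr m (xi / eta) + absTr m (eta^-1)) 0 _ two0 (erefl (0:L))); ring.
Qed.

Theorem proposition3 (m : nat) (L : finFieldType)
  (hL : #|L| = (2 ^ m * 2 ^ m)%N)
  (k i kbar A B C D : L)
  (hk : inFq (2 ^ m) k) (hTrk : absTr m k = 1)
  (hi : ~~ inFq (2 ^ m) i) (hi2 : i ^+ 2 = i + k)
  (hkbar : inFq (2 ^ m) kbar) (hkbar4 : kbar ^+ 4 = k)
  (hA : inFq (2 ^ m) A) (hB : inFq (2 ^ m) B)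
  (hC : inFq (2 ^ m) C) (hD : inFq (2 ^ m) D)
  (hab : (A + i * B) * (C + i * D) != 0) :
  let q := (2 ^ m)%N in
  let alpha := A + i * B in
  let beta := C + i * D in
  (exists xi eta : L,
      [/\ inFq q xi, inFq q eta & eta != 0] /\
      [/\ A = (eta * kbar + eta + xi) ^+ 2
                * (eta ^+ 2 * kbar + eta * xi + xi ^+ 2 + 1),
          B = eta ^+ 4 * kbar + xi ^+ 2 * eta ^+ 2 + xi * eta ^+ 3 + eta ^+ 2,
          C = xi ^+ 4 & D = eta ^+ 4]
      /\ absTr m (B / D + 1 + 1 / D ^+ 2 + D / B ^+ 2) = 1
      /\ eta ^+ 2 * kbar + xi ^+ 2 + xi * eta + 1 \notin [:: 0; eta ^+ 2])
  <->
  [/\ beta * (1 + alpha ^+ q.+1 + beta ^+ q.+1) + alpha ^+ (2 * q) = 0,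
      beta ^+ q.+1 != 1,
      absTr m (beta ^+ q.+1 / alpha ^+ q.+1) = 0
    & ~~ inFq q beta].
Proof.
move=> q alpha beta; subst q alpha beta.
have h2 : 2 \in [pchar L].
  by apply: (@card_finPcharP L 2 (m + m)) => //; rewrite hL expnD.
have two0 : 2%:R = 0 :> L := pcharf0 h2.
have hI : i ^+ 2 - i - kbar ^+ 4 = 0 by rewrite hi2 hkbar4; ring.
have m_gt0 : (0 < m)%N.
  rewrite lt0n; apply/eqP => m0; move: hi; by rewrite /inFq m0 expn0 expr1 eqxx.
have Tkb : absTr m kbar = 1.
  rewrite -hTrk -hkbar4 (exprM kbar 2 2) absTr_sq ?absTr_sq //.
  exact: inFq_exp.
have iq : i ^+ (2 ^ m) = i + 1.
  have hj : (i ^+ (2 ^ m)) ^+ 2 = i ^+ (2 ^ m) + k.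
    by rewrite exprAC hi2 frobD2 // (eqP hk).
  have : (i ^+ (2 ^ m) - i) * (i ^+ (2 ^ m) + i - 1) = 0.
    have -> : (i ^+ (2 ^ m) - i) * (i ^+ (2 ^ m) + i - 1)
       = ((i ^+ (2 ^ m)) ^+ 2 - i ^+ (2 ^ m)) - (i ^+ 2 - i) by ring.
    rewrite hj hi2; ring.
  have hi' : (i ^+ (2 ^ m) == i) = false := negbTE hi.
  move/eqP; rewrite mulf_eq0 subr_eq0 hi' /= => /eqP e.
  transitivity ((i ^+ (2 ^ m) + i - 1) + (1 - i)); first ring.
  by rewrite e add0r (oppc2 two0) addrC.
have conjE : forall X Y, inFq (2 ^ m) X -> inFq (2 ^ m) Y ->
    (X + i * Y) ^+ (2 ^ m) = X + Y + i * Y.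
  move=> X Y /eqP hX /eqP hY; rewrite frobD2 // exprMn hX hY iq; ring.
have normq : forall X Y, inFq (2 ^ m) X -> inFq (2 ^ m) Y ->
    (X + i * Y) ^+ (2 ^ m).+1 = X ^+ 2 + X * Y + kbar ^+ 4 * Y ^+ 2.
  by move=> X Y FX FY; rewrite exprS conjE //; exact: normE.
have e2q : (A + i * B) ^+ (2 * 2 ^ m) = (A + B + i * B) ^+ 2.
  by rewrite mulnC exprM conjE.
have betaFq : inFq (2 ^ m) (C + i * D) = (D == 0).
  rewrite /inFq conjE // -subr_eq0.
  by have -> : C + D + i * D - (C + i * D) = D by ring.
have a0 : A + i * B != 0 by move: hab; rewrite mulf_eq0 negb_or => /andP[].
have Na0 : A ^+ 2 + A * B + kbar ^+ 4 * B ^+ 2 != 0.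
  by rewrite -normq // expf_neq0.
rewrite !normq // e2q betaFq (decE two0 _ _ _ _ _ _ _ hI).
split.
- case=> xi [eta [[Fxi Feta eta0] [[eA eB eC eD] [Htr HP]]]].
  move: HP; rewrite !inE negb_or => /andP[P0 Pe].
  have [P hP] : exists P, P = eta ^+ 2 * kbar + xi ^+ 2 + xi * eta + 1 by eexists.
  rewrite -hP in P0 Pe.
  have eA' : A = P * (eta * kbar + eta + xi) ^+ 2 by rewrite eA hP; ring.
  have eB' : B = eta ^+ 2 * P by rewrite eB hP; ring.
  clear eA eB; subst A B C D.
  rewrite (NaE two0 _ _ _ _ hP) in Na0 *; rewrite (NbE two0 _ _ _ _ hP).
  have P10 : P + 1 != 0 by move: Na0; rewrite mulf_eq0 negb_or !expf_eq0 /= => /andP[_ ->].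
  split.
  + by rewrite (XE two0) (YE two0) mulr0 addr0.
  + apply/eqP => h; move/eqP: P0; apply.
    have : P ^+ 4 + 1 = 1 by rewrite -[RHS]h (@frobD2 L 2 P 1 two0) expr1n.
    by move/eqP; rewrite -subr_eq0 addrK expf_eq0 /= => /eqP.
  + have := trace_core m two0 _ _ _ _ hkbar Fxi Feta Tkb eta0 P0 P10 hP.
    rewrite Htr => h.
    by apply: (@addrI _ 1); rewrite addr0 -h.
  + by rewrite expf_eq0 /= eta0.
- case=> E0 Nb1 Tr0 D0.
  have FX : inFq (2 ^ m) (C * (1 + (A ^+ 2 + A * B + kbar ^+ 4 * B ^+ 2) +
      (C ^+ 2 + C * D + kbar ^+ 4 * D ^+ 2)) + A ^+ 2 + (1 + kbar ^+ 4) * B ^+ 2).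
    by fq two0.
  have FY : inFq (2 ^ m) (D * (1 + (A ^+ 2 + A * B + kbar ^+ 4 * B ^+ 2) +
      (C ^+ 2 + C * D + kbar ^+ 4 * D ^+ 2)) + B ^+ 2).
    by fq two0.
  have [X0 Y0] := compP _ two0 _ _ _ hi FX FY E0.
  clear FX FY E0.
  have sq : forall z : L, inFq (2 ^ m) z -> (z ^+ (2 ^ m.-1)) ^+ 2 = z.
    by move=> z /eqP hz; rewrite -exprM -expnSr (prednK m_gt0).
  have root : forall x : L, inFq (2 ^ m) x -> exists2 y, inFq (2 ^ m) y & y ^+ 4 = x.
    move=> x Fx; exists ((x ^+ (2 ^ m.-1)) ^+ (2 ^ m.-1)); first by do 2 apply: inFq_exp.
    by rewrite (exprM _ 2 2) sq ?sq //; apply: inFq_exp.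
  have [xi Fxi exi] := root C hC.
  have [eta Feta eeta] := root D hD.
  subst C D.
  have eta0 : eta != 0 by move: D0; rewrite expf_eq0 /=.
  have [P hP] : exists P, P = eta ^+ 2 * kbar + xi ^+ 2 + xi * eta + 1 by eexists.
  rewrite (NbE two0 _ _ _ _ hP) in Nb1 X0 Y0 Tr0.
  have P0 : P != 0.
    by apply: contraNneq Nb1 => ->; rewrite add0r expr1n.
  have R1 : eta ^+ 2 * A = B * (eta * kbar + eta + xi) ^+ 2.
    apply: (@sq_inj2 L _ _ two0).
    have := DCE two0 kbar xi eta A B (1 + (A ^+ 2 + A * B + kbar ^+ 4 * B ^+ 2) + (P + 1) ^+ 4).
    rewrite X0 Y0 !mulr0 addr0 => /esym /eqP; rewrite subr_eq0 => /eqP.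
    done.
  have eNa4 : eta ^+ 4 * (A ^+ 2 + A * B + kbar ^+ 4 * B ^+ 2) = B ^+ 2 * (P ^+ 2 + 1).
    have -> : eta ^+ 4 * (A ^+ 2 + A * B + kbar ^+ 4 * B ^+ 2) = (eta ^+ 2 * A) ^+ 2
       + eta ^+ 2 * (eta ^+ 2 * A) * B + kbar ^+ 4 * eta ^+ 4 * B ^+ 2 by ring.
    by rewrite R1 (Na2E two0 _ _ _ _ _ hP).
  have eB : B = eta ^+ 2 * P.
    have h : eta ^+ 4 * (eta ^+ 4 * (1 + (A ^+ 2 + A * B + kbar ^+ 4 * B ^+ 2) + (P + 1) ^+ 4)
        + B ^+ 2) = eta ^+ 4 * ((eta ^+ 2 * P ^+ 2) ^+ 2 - (B * P) ^+ 2).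
      rewrite -(Y2E two0).
      have -> : eta ^+ 4 * (eta ^+ 4 * (1 + (A ^+ 2 + A * B + kbar ^+ 4 * B ^+ 2)
          + (P + 1) ^+ 4) + B ^+ 2) = eta ^+ 8 * (1 + (P + 1) ^+ 4)
          + eta ^+ 4 * (eta ^+ 4 * (A ^+ 2 + A * B + kbar ^+ 4 * B ^+ 2)) + eta ^+ 4 * B ^+ 2
        by ring.
      by rewrite eNa4.
    move: h; rewrite Y0 mulr0 => /esym /eqP.
    rewrite mulf_eq0 expf_eq0 (negbTE eta0) /= subr_eq0 => /eqP h.
    have {}h := @sq_inj2 L _ _ two0 h.
    by apply: (mulIf P0); rewrite -h; ring.
  have eA : A = P * (eta * kbar + eta + xi) ^+ 2.
    by apply: (mulfI (expf_neq0 2 eta0)); rewrite R1 eB; ring.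
  clear R1 eNa4 X0 Y0; subst A B.
  rewrite (NaE two0 _ _ _ _ hP) in Na0 Tr0.
  have P10 : P + 1 != 0.
    by move: Na0; rewrite mulf_eq0 negb_or !expf_eq0 /= => /andP[_ ->].
  have Htr := trace_core m two0 _ _ _ _ hkbar Fxi Feta Tkb eta0 P0 P10 hP.
  rewrite Tr0 addr0 in Htr.
  exists xi, eta; split; first by split.
  split; first split => //.
  + by rewrite hP; ring.
  + by rewrite hP; ring.
  split; first exact: Htr.
  rewrite -hP !inE negb_or P0 /=.
  apply/eqP => Pe; move: Htr; rewrite Pe.
  have -> : eta ^+ 2 * eta ^+ 2 / eta ^+ 4 + 1 + 1 / (eta ^+ 4) ^+ 2
      + eta ^+ 4 / (eta ^+ 2 * eta ^+ 2) ^+ 2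
      = ((eta^-1) ^+ 4) ^+ 2 + (eta^-1) ^+ 4 + 2%:R.
    by field.
  rewrite two0 addr0 absTr_sqx //; last by fq two0.
  by move/eqP; rewrite eq_sym oner_eq0.
Qed.
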